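(* Let $M_{cc}$ be the one-state Turing machine defined below. The language $L_{cc}=\{x\in\{u,0,h\}^*\mid M_{cc}\text{ halts on input }x\}$ is not context-free.
   Context: A one-state Turing machine is a tuple $\langle \{q\}, \Sigma, \Gamma, q, H, \delta\rangle$ with the following components: a unique state $q$; an input alphabet $\Sigma$ not containing the blank symbol $\sqcup$; a tape alphabet $\Gamma\supseteq\Sigma\cup\{\sqcup\}$; a set of halting symbols $H\subseteq\Gamma$; and a transition function $\delta:\Gamma\setminus H\to\Gamma\times\{L,R\}$. The tape is infinite in both directions. On input $x$, the tape holds $x$ with blanks everywhere else, and the head starts on the leftmost symbol of $x$. At each step, if the scanned symbol is in $H$, the machine halts. Otherwise, with $\delta(a)=(b,D)$ for the scanned symbol $a$, it writes $b$ and moves one cell in direction $D$. The machine $M_{cc}$ is this kind of machine with $\Sigma=\{u,0,h\}$, $\Gamma=\{\sqcup,u,U,h,0,1,Z,C,B\}$, $H=\{h\}$, and transitions $\delta(u)=(U,R)$, $\delta(0)=(1,L)$, $\delta(U)=(C,R)$, $\delta(1)=(Z,R)$, $\delta(Z)=(0,L)$, $\delta(C)=(B,L)$, $\delta(B)=(C,R)$, $\delta(\sqcup)=(\sqcup,L)$. *)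

(* Defs.v *)
From Stdlib Require Import ZArith List Relations Bool.
Import ListNotations.
Open Scope Z_scope.

Inductive dir := DL | DR.

(* A one-state TM over tape alphabet G: blank symbol, halting-symbol
   predicate H, and transition function delta (only consulted on symbols
   not in H, as in the paper's delta : Gamma \ H -> Gamma x {L,R}). *)
Record OneStateTM (G : Type) := {
  blank : G;
  halting : G -> bool;
  delta : G -> G * dir
}.
Arguments blank {G}. Arguments halting {G}. Arguments delta {G}.

Definition config (G : Type) : Type := ((Z -> G) * Z)%type.

Definition step {G} (M : OneStateTM G) (c : config G) : config G :=
  let '(t, p) := c in
  if halting M (t p) then c else
  let '(b, d) := delta M (t p) in
  ((fun i => if Z.eqb i p then b else t i),
   match d with DL => p - 1 | DR => p + 1 end).

Fixpoint run {G} (M : OneStateTM G) (n : nat) (c : config G) : config G :=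
  match n with O => c | S n' => run M n' (step M c) end.

Definition init_config {G} (M : OneStateTM G) (x : list G) : config G :=
  ((fun i => if andb (0 <=? i) (i <? Z.of_nat (length x))
             then nth (Z.to_nat i) x (blank M) else blank M), 0).

Definition halts {G} (M : OneStateTM G) (x : list G) : Prop :=
  exists n : nat, let '(t, p) := run M n (init_config M x) in
                  halting M (t p) = true.

Inductive gam := Gblank | Gu | GU | Gh | G0 | G1 | GZ | GC | GB.
Inductive sig := Su | S0 | Sh.

Definition sig_to_gam (a : sig) : gam :=
  match a with Su => Gu | S0 => G0 | Sh => Gh end.

Definition Mcc : OneStateTM gam := {|
  blank := Gblank;
  halting := fun a => match a with Gh => true | _ => false end;
  delta := fun a => match a with
    | Gu => (GU, DR)
    | G0 => (G1, DL)
    | GU => (GC, DR)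
    | G1 => (GZ, DR)
    | GZ => (G0, DL)
    | GC => (GB, DL)
    | GB => (GC, DR)
    | Gblank => (Gblank, DL)
    | Gh => (Gh, DR) (* irrelevant: h is halting *)
    end
|}.

Definition L_cc (x : list sig) : Prop := halts Mcc (map sig_to_gam x).

Record cfg (T : Type) := {
  cfg_start : nat;
  cfg_rules : list (nat * list (nat + T))
}.
Arguments cfg_start {T}. Arguments cfg_rules {T}.

Definition cfg_step {T} (g : cfg T) (s s' : list (nat + T)) : Prop :=
  exists (l r : list (nat + T)) (A : nat) (rhs : list (nat + T)),
    In (A, rhs) (cfg_rules g) /\ s = l ++ inl A :: r /\ s' = l ++ rhs ++ r.

Definition cfg_derives {T} (g : cfg T) : relation (list (nat + T)) :=
  clos_refl_trans _ (cfg_step g).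

Definition cfg_generates {T} (g : cfg T) (w : list T) : Prop :=
  cfg_derives g [inl (cfg_start g)] (map inr w).

Definition context_free {T} (L : list T -> Prop) : Prop :=
  exists g : cfg T, forall w, L w <-> cfg_generates g w.

(* Main.v *)
Require Import Defs.
From Stdlib Require Import ZArith List Relations Bool Lia Classical FunctionalExtensionality Arith.
Import ListNotations.
Open Scope Z_scope.

Definition reach (c c' : config gam) := exists n, run Mcc n c = c'.

Lemma run_add : forall n m c, run Mcc (n+m) c = run Mcc m (run Mcc n c).
Proof. induction n; simpl; auto. Qed.

Lemma reach_refl c : reach c c. Proof. exists 0%nat; auto. Qed.
Lemma reach_trans a b c : reach a b -> reach b c -> reach a c.
Proof. intros [n H1] [m H2]. exists (n+m)%nat. rewrite run_add, H1; auto. Qed.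

Definition upd (t : Z -> gam) p s := fun i => if Z.eqb i p then s else t i.

Lemma reach_step t p s s' d : t p = s -> halting Mcc s = false -> delta Mcc s = (s', d) ->
  reach (t,p) (upd t p s', match d with DL => p-1 | DR => p+1 end).
Proof. intros H1 H2 H3. exists 1%nat. change (step Mcc (t,p) = (upd t p s', match d with DL => p-1 | DR => p+1 end)). unfold step. rewrite H1, H2, H3. reflexivity. Qed.

Lemma upd_eq t p s i : i = p -> upd t p s i = s.
Proof. intros ->. unfold upd. rewrite Z.eqb_refl. auto. Qed.
Lemma upd_neq t p s i : i <> p -> upd t p s i = t i.
Proof. intros H. unfold upd. apply Z.eqb_neq in H. rewrite H. auto. Qed.

Lemma sweepR s s' : halting Mcc s = false -> delta Mcc s = (s', DR) ->
  forall (j:nat) t p, (forall i, p <= i < p + Z.of_nat j -> t i = s) ->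
  exists t', reach (t,p) (t', p + Z.of_nat j) /\
    (forall i, p <= i < p + Z.of_nat j -> t' i = s') /\
    (forall i, ~ (p <= i < p + Z.of_nat j) -> t' i = t i).
Proof.
  intros Hh Hd. induction j as [|j IH]; intros t p Ht.
  - exists t. split. replace (p + Z.of_nat 0) with p by lia. apply reach_refl.
    split; intros; auto. lia.
  - assert (E: t p = s) by (apply Ht; lia).
    pose proof (reach_step _ _ _ _ _ E Hh Hd) as R1. simpl in R1.
    destruct (IH (upd t p s') (p+1)) as [t' [R2 [H1 H2]]].
    { intros i Hi. rewrite upd_neq by lia. apply Ht. lia. }
    exists t'. split.
    + replace (p + Z.of_nat (S j)) with (p + 1 + Z.of_nat j) by lia. eapply reach_trans; eauto.
    + split; intros i Hi.
      * destruct (Z.eq_dec i p). subst. rewrite H2 by lia. apply upd_eq; auto.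
        apply H1. lia.
      * rewrite H2 by lia. apply upd_neq. lia.
Qed.

Lemma sweepL s s' : halting Mcc s = false -> delta Mcc s = (s', DL) ->
  forall (j:nat) t p, (forall i, p - Z.of_nat j < i <= p -> t i = s) ->
  exists t', reach (t,p) (t', p - Z.of_nat j) /\
    (forall i, p - Z.of_nat j < i <= p -> t' i = s') /\
    (forall i, ~ (p - Z.of_nat j < i <= p) -> t' i = t i).
Proof.
  intros Hh Hd. induction j as [|j IH]; intros t p Ht.
  - exists t. split. replace (p - Z.of_nat 0) with p by lia. apply reach_refl.
    split; intros; auto. lia.
  - assert (E: t p = s) by (apply Ht; lia).
    pose proof (reach_step _ _ _ _ _ E Hh Hd) as R1. simpl in R1.
    destruct (IH (upd t p s') (p-1)) as [t' [R2 [H1 H2]]].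
    { intros i Hi. rewrite upd_neq by lia. apply Ht. lia. }
    exists t'. split.
    + replace (p - Z.of_nat (S j)) with (p - 1 - Z.of_nat j) by lia. eapply reach_trans; eauto.
    + split; intros i Hi.
      * destruct (Z.eq_dec i p). subst. rewrite H2 by lia. apply upd_eq; auto.
        apply H1. lia.
      * rewrite H2 by lia. apply upd_neq. lia.
Qed.

Definition gad (t : Z -> gam) (a b : Z) := 0 <= a /\ 0 <= b /\ (forall i, i < 0 -> t i = Gblank) /\
  (forall i, 0 <= i < a -> t i = GU) /\ (forall i, a <= i < a + b -> t i = GC).

Definition doomed (c : config gam) := let '(t,p) := c in p < 0 /\ forall i, i <= p -> t i = Gblank.

Lemma request t a b n : gad t a b -> n = a + b -> 1 <= a ->
  exists t', reach (t, n-1) (t', n) /\ gad t' (a-1) (b+1) /\ (forall i, n <= i -> t' i = t i).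
Proof.
  intros (Ha & Hb & Hneg & HU & HC) Hn Ha1.
  destruct (sweepL GC GB eq_refl eq_refl (Z.to_nat b) t (n-1)) as [t1 [R1 [H1 H1']]].
  { intros i Hi. apply HC. lia. }
  rewrite Z2Nat.id in * by lia.
  assert (E: t1 (n-1-b) = GU) by (rewrite H1' by lia; apply HU; lia).
  pose proof (reach_step _ _ _ _ _ E eq_refl eq_refl) as R2. simpl in R2.
  destruct (sweepR GB GC eq_refl eq_refl (Z.to_nat b) (upd t1 (n-1-b) GC) (n-1-b+1)) as [t3 [R3 [H3 H3']]].
  { intros i Hi. rewrite upd_neq by lia. apply H1. lia. }
  rewrite Z2Nat.id in * by lia.
  exists t3. split.
  { replace n with (n-1-b+1+b) at 2 by lia. eapply reach_trans; [exact R1|]. eapply reach_trans; eauto. }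
  split; [split; [lia|split;[lia|split;[|split]]]|].
  - intros i Hi. rewrite H3' by lia. rewrite upd_neq by lia. rewrite H1' by lia. auto.
  - intros i Hi. rewrite H3' by lia. rewrite upd_neq by lia. rewrite H1' by lia. apply HU; lia.
  - intros i Hi. destruct (Z.eq_dec i (n-1-b)).
    + rewrite H3' by lia. apply upd_eq; auto.
    + apply H3. lia.
  - intros i Hi. rewrite H3' by lia. rewrite upd_neq by lia. rewrite H1' by lia. auto.
Qed.

Lemma request_fail t b n : gad t 0 b -> n = b -> exists c, reach (t, n-1) c /\ doomed c.
Proof.
  intros (Ha & Hb & Hneg & HU & HC) Hn.
  destruct (sweepL GC GB eq_refl eq_refl (Z.to_nat b) t (n-1)) as [t1 [R1 [H1 H1']]].
  { intros i Hi. apply HC. lia. }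
  rewrite Z2Nat.id in * by lia.
  eexists; split; [exact R1|]. simpl. split; [lia|]. intros i Hi. rewrite H1' by lia. apply Hneg; lia.
Qed.

Lemma pow2S k : 2 ^ Z.of_nat (S k) = 2 * 2 ^ Z.of_nat k.
Proof. rewrite Nat2Z.inj_succ, Z.pow_succ_r by lia. lia. Qed.
Lemma pow2pos k : 1 <= 2 ^ Z.of_nat k.
Proof. induction k. simpl; lia. rewrite pow2S; lia. Qed.

Lemma blk_pos : forall (k:nat) t a b n, gad t a b -> n = a + b ->
  (forall i, n <= i < n + Z.of_nat k -> t i = G0) -> 2 ^ Z.of_nat k - 1 <= a ->
  exists t', reach (t, n) (t', n + Z.of_nat k) /\ gad t' (a - (2 ^ Z.of_nat k - 1)) (b + (2 ^ Z.of_nat k - 1)) /\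
    (forall i, n <= i < n + Z.of_nat k -> t' i = GZ) /\ (forall i, n + Z.of_nat k <= i -> t' i = t i).
Proof.
  induction k as [|k IH]; intros t a b n Hg Hn H0 Ha.
  - exists t. simpl. replace (n+0) with n by lia. split. apply reach_refl.
    replace (a - (1-1)) with a by lia. replace (b + (1-1)) with b by lia.
    split. rewrite Z.sub_0_r, Z.add_0_r; auto. split; intros; auto. lia.
  - rewrite pow2S in *. set (P := 2 ^ Z.of_nat k) in *. assert (HP := pow2pos k). fold P in HP.
    destruct (IH t a b n Hg Hn) as [t1 [R1 [Ga1 [Z1 E1]]]].
    { intros i Hi; apply H0; lia. } { lia. }
    assert (E: t1 (n + Z.of_nat k) = G0) by (rewrite E1 by lia; apply H0; lia).
    pose proof (reach_step _ _ _ _ _ E eq_refl eq_refl) as R2. simpl in R2.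
    destruct (sweepL GZ G0 eq_refl eq_refl k (upd t1 (n + Z.of_nat k) G1) (n + Z.of_nat k - 1)) as [t3 [R3 [H3 H3']]].
    { intros i Hi. rewrite upd_neq by lia. apply Z1. lia. }
    replace (n + Z.of_nat k - 1 - Z.of_nat k) with (n - 1) in * by lia.
    assert (Ga3: gad t3 (a - (P-1)) (b + (P-1))).
    { destruct Ga1 as (g1&g2&g3&g4&g5). split;[lia|split;[lia|split;[|split]]].
      - intros i Hi. rewrite H3' by lia. rewrite upd_neq by lia. auto.
      - intros i Hi. rewrite H3' by lia. rewrite upd_neq by lia. auto.
      - intros i Hi. rewrite H3' by lia. rewrite upd_neq by lia. auto. }
    destruct (request t3 _ _ n Ga3) as [t4 [R4 [Ga4 E4]]]; [lia|lia|].
    destruct (IH t4 (a - (P-1) - 1) (b + (P-1) + 1) n Ga4) as [t5 [R5 [Ga5 [Z5 E5]]]]; [lia| |lia|].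
    { intros i Hi. rewrite E4 by lia. apply H3. lia. }
    assert (E': t5 (n + Z.of_nat k) = G1).
    { rewrite E5 by lia. rewrite E4 by lia. rewrite H3' by lia. apply upd_eq; auto. }
    pose proof (reach_step _ _ _ _ _ E' eq_refl eq_refl) as R6. simpl in R6.
    exists (upd t5 (n + Z.of_nat k) GZ). split.
    { replace (n + Z.of_nat (S k)) with (n + Z.of_nat k + 1) by lia.
      eapply reach_trans; [exact R1|]. eapply reach_trans; [exact R2|].
      eapply reach_trans; [exact R3|]. eapply reach_trans; [exact R4|].
      eapply reach_trans; [exact R5|]. exact R6. }
    destruct Ga5 as (g1&g2&g3&g4&g5).
    split; [split;[lia|split;[lia|split;[|split]]]|split].
    + intros i Hi. rewrite upd_neq by lia. auto.
    + intros i Hi. rewrite upd_neq by lia. apply g4. lia.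
    + intros i Hi. rewrite upd_neq by lia. apply g5. lia.
    + intros i Hi. destruct (Z.eq_dec i (n + Z.of_nat k)). apply upd_eq; auto.
      rewrite upd_neq by lia. apply Z5. lia.
    + intros i Hi. rewrite upd_neq by lia. rewrite E5 by lia. rewrite E4 by lia.
      rewrite H3' by lia. rewrite upd_neq by lia. apply E1. lia.
Qed.

Lemma blk_neg : forall (k:nat) t a b n, gad t a b -> n = a + b ->
  (forall i, n <= i < n + Z.of_nat k -> t i = G0) -> a < 2 ^ Z.of_nat k - 1 ->
  exists c, reach (t, n) c /\ doomed c.
Proof.
  induction k as [|k IH]; intros t a b n Hg Hn H0 Ha.
  - simpl in Ha. destruct Hg; lia.
  - rewrite pow2S in *. set (P := 2 ^ Z.of_nat k) in *. assert (HP := pow2pos k). fold P in HP.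
    destruct (Z_lt_le_dec a (P - 1)) as [Hlt|Hge].
    { apply (IH t a b n Hg Hn); auto. intros i Hi; apply H0; lia. }
    destruct (blk_pos k t a b n Hg Hn) as [t1 [R1 [Ga1 [Z1 E1]]]].
    { intros i Hi; apply H0; lia. } { lia. }
    assert (E: t1 (n + Z.of_nat k) = G0) by (rewrite E1 by lia; apply H0; lia).
    pose proof (reach_step _ _ _ _ _ E eq_refl eq_refl) as R2. simpl in R2.
    destruct (sweepL GZ G0 eq_refl eq_refl k (upd t1 (n + Z.of_nat k) G1) (n + Z.of_nat k - 1)) as [t3 [R3 [H3 H3']]].
    { intros i Hi. rewrite upd_neq by lia. apply Z1. lia. }
    replace (n + Z.of_nat k - 1 - Z.of_nat k) with (n - 1) in * by lia.
    assert (Ga3: gad t3 (a - (P-1)) (b + (P-1))).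
    { destruct Ga1 as (g1&g2&g3&g4&g5). split;[lia|split;[lia|split;[|split]]].
      - intros i Hi. rewrite H3' by lia. rewrite upd_neq by lia. auto.
      - intros i Hi. rewrite H3' by lia. rewrite upd_neq by lia. auto.
      - intros i Hi. rewrite H3' by lia. rewrite upd_neq by lia. auto. }
    assert (Rpre: reach (t, n) (t3, n-1)).
    { eapply reach_trans; [exact R1|]. eapply reach_trans; [exact R2|]. exact R3. }
    destruct (Z.eq_dec (a - (P-1)) 0) as [Hz|Hnz].
    + rewrite Hz in Ga3. destruct (request_fail t3 _ n Ga3) as [c [R4 D4]]; [lia|].
      exists c; split; auto. eapply reach_trans; eauto.
    + destruct (request t3 _ _ n Ga3) as [t4 [R4 [Ga4 E4]]]; [lia|lia|].
      destruct (IH t4 (a - (P-1) - 1) (b + (P-1) + 1) n Ga4) as [c [R5 D5]]; [lia| |lia|].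
      { intros i Hi. rewrite E4 by lia. apply H3. lia. }
      exists c; split; auto. eapply reach_trans; [exact Rpre|]. eapply reach_trans; eauto.
Qed.

Lemma doomed_step c : doomed c -> doomed (step Mcc c).
Proof.
  destruct c as [t p]. simpl. intros [Hp Ht].
  unfold step. rewrite (Ht p) by lia. simpl. split; [lia|].
  intros i Hi. destruct (Z.eqb_spec i p); auto. apply Ht; lia.
Qed.

Lemma doomed_run : forall n c, doomed c -> doomed (run Mcc n c).
Proof. induction n; simpl; auto. intros c H. apply IHn, doomed_step, H. Qed.

Lemma doomed_nh c : doomed c -> let '(t,p) := c in halting Mcc (t p) = false.
Proof. destruct c as [t p]. simpl. intros [Hp Ht]. rewrite Ht by lia. reflexivity. Qed.

Lemma halt_fix : forall n t p, halting Mcc (t p) = true -> run Mcc n (t,p) = (t,p).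
Proof.
  induction n; intros t p H; auto.
  change (run Mcc n (step Mcc (t,p)) = (t,p)).
  assert (step Mcc (t,p) = (t,p)) as ->. { unfold step. cbv beta iota. rewrite H. reflexivity. }
  apply IHn; auto.
Qed.

Lemma not_halts x c : reach (init_config Mcc x) c -> doomed c -> ~ halts Mcc x.
Proof.
  intros [m Hm] Hd [n Hn].
  destruct (run Mcc n (init_config Mcc x)) as [t p] eqn:E.
  destruct (Nat.le_gt_cases n m).
  - replace m with (n + (m - n))%nat in Hm by lia. rewrite run_add, E, halt_fix in Hm by auto.
    subst c. pose proof (doomed_nh _ Hd). cbv beta iota in H0. congruence.
  - replace n with (m + (n - m))%nat in E by lia. rewrite run_add, Hm in E.
    pose proof (doomed_nh _ (doomed_run (n-m) c Hd)). rewrite E in H0. congruence.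
Qed.

Definition wrd (n k : nat) : list sig := repeat Su n ++ repeat S0 k ++ [Sh].

Lemma nth_wrd (n k : nat) (j : nat) :
  nth j (map sig_to_gam (wrd n k)) Gblank =
  if (j <? n)%nat then Gu else if (j <? n + k)%nat then G0 else if (j =? n + k)%nat then Gh else Gblank.
Proof.
  unfold wrd. rewrite !map_app, !map_repeat.
  destruct (Nat.ltb_spec j n).
  { rewrite app_nth1 by (rewrite repeat_length; lia). apply nth_repeat_lt; auto. }
  rewrite app_nth2 by (rewrite repeat_length; lia). rewrite repeat_length.
  destruct (Nat.ltb_spec j (n+k)).
  { rewrite app_nth1 by (rewrite repeat_length; lia). apply nth_repeat_lt; lia. }
  rewrite app_nth2 by (rewrite repeat_length; lia). rewrite repeat_length.
  destruct (Nat.eqb_spec j (n+k)).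
  { replace (j - n - k)%nat with 0%nat by lia. reflexivity. }
  replace (j - n - k)%nat with (S (j - n - k - 1)) by lia. simpl. destruct (j-n-k-1)%nat; auto.
Qed.

Lemma init_wrd n k : let t := fst (init_config Mcc (map sig_to_gam (wrd n k))) in
  (forall i, i < 0 -> t i = Gblank) /\ (forall i, 0 <= i < Z.of_nat n -> t i = Gu) /\
  (forall i, Z.of_nat n <= i < Z.of_nat n + Z.of_nat k -> t i = G0) /\
  t (Z.of_nat n + Z.of_nat k) = Gh.
Proof.
  simpl. assert (L: Z.of_nat (length (map sig_to_gam (wrd n k))) = Z.of_nat n + Z.of_nat k + 1).
  { rewrite length_map. unfold wrd. rewrite !length_app, !repeat_length. simpl. lia. }
  rewrite L. split; [|split;[|split]].
  - intros i Hi. destruct (0 <=? i) eqn:E; simpl; auto. apply Z.leb_le in E; lia.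
  - intros i Hi. replace (0 <=? i) with true by (symmetry; apply Z.leb_le; lia).
    replace (i <? _) with true by (symmetry; apply Z.ltb_lt; lia). simpl.
    rewrite nth_wrd. replace (Z.to_nat i <? n)%nat with true by (symmetry; apply Nat.ltb_lt; lia). auto.
  - intros i Hi. replace (0 <=? i) with true by (symmetry; apply Z.leb_le; lia).
    replace (i <? _) with true by (symmetry; apply Z.ltb_lt; lia). simpl.
    rewrite nth_wrd. replace (Z.to_nat i <? n)%nat with false by (symmetry; apply Nat.ltb_ge; lia).
    replace (Z.to_nat i <? n + k)%nat with true by (symmetry; apply Nat.ltb_lt; lia). auto.
  - replace (0 <=? _) with true by (symmetry; apply Z.leb_le; lia).
    replace (_ <? _) with true by (symmetry; apply Z.ltb_lt; lia). simpl.
    rewrite nth_wrd. replace (Z.to_nat _ <? n)%nat with false by (symmetry; apply Nat.ltb_ge; lia).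
    replace (Z.to_nat _ <? n + k)%nat with false by (symmetry; apply Nat.ltb_ge; lia).
    replace (Z.to_nat _ =? n + k)%nat with true by (symmetry; apply Nat.eqb_eq; lia). auto.
Qed.

Lemma tm_char (n k : nat) : L_cc (wrd n k) <-> (2 ^ k <= n + 1)%nat.
Proof.
  unfold L_cc. destruct (init_wrd n k) as (Hneg & HU & H0 & Hh).
  set (t := fst _) in *.
  assert (Hi: init_config Mcc (map sig_to_gam (wrd n k)) = (t, 0)) by reflexivity.
  destruct (sweepR Gu GU eq_refl eq_refl n t 0) as [t1 [R1 [U1 E1]]].
  { intros i Hi'. apply HU. lia. }
  simpl in R1.
  assert (Ga: gad t1 (Z.of_nat n) 0).
  { split;[lia|split;[lia|split;[|split]]].
    - intros i Hi'. rewrite E1 by lia. auto.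
    - intros i Hi'. apply U1. lia.
    - intros i Hi'. lia. }
  assert (Z0: forall i, Z.of_nat n <= i < Z.of_nat n + Z.of_nat k -> t1 i = G0).
  { intros i Hi'. rewrite E1 by lia. auto. }
  assert (P: Z.of_nat (2 ^ k) = 2 ^ Z.of_nat k) by (rewrite Nat2Z.inj_pow; reflexivity).
  split.
  - intros H. destruct (Nat.le_gt_cases (2^k) (n+1)); auto. exfalso.
    destruct (blk_neg k t1 (Z.of_nat n) 0 (Z.of_nat n) Ga ltac:(lia) Z0) as [c [R D]]; [lia|].
    apply (not_halts (map sig_to_gam (wrd n k)) c); auto. rewrite Hi. eapply reach_trans; eauto.
  - intros H.
    destruct (blk_pos k t1 (Z.of_nat n) 0 (Z.of_nat n) Ga ltac:(lia) Z0) as [t2 [R [_ [_ E2]]]]; [lia|].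
    destruct (reach_trans _ _ _ R1 R) as [m Hm]. exists m. rewrite Hi, Hm.
    rewrite E2 by lia. rewrite E1 by lia. rewrite Hh. reflexivity.
Qed.
Open Scope nat_scope.

Section Gram.
Variable T : Type.
Variable g : cfg T.
Notation sym := (nat + T)%type.
Notation der := (cfg_derives g).

Lemma der_ctx : forall s s', der s s' -> forall l r, der (l ++ s ++ r) (l ++ s' ++ r).
Proof.
  intros s s' H. induction H; intros l0 r0.
  - destruct H as (l & r & A & rhs & Hin & -> & ->). apply rt_step.
    exists (l0 ++ l), (r ++ r0), A, rhs. split; auto.
    split; repeat (rewrite <- app_assoc; simpl); try reflexivity.
  - apply rt_refl.
  - eapply rt_trans; [apply IHclos_refl_trans1|apply IHclos_refl_trans2].
Qed.

Lemma der_app s1 s1' s2 s2' : der s1 s1' -> der s2 s2' -> der (s1 ++ s2) (s1' ++ s2').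
Proof.
  intros H1 H2. eapply rt_trans.
  - pose proof (der_ctx _ _ H1 [] s2). simpl in H. exact H.
  - pose proof (der_ctx _ _ H2 s1' []). rewrite !app_nil_r in H. exact H.
Qed.

Inductive gtree : nat -> list T -> Prop :=
| gt_node A rhs w : In (A, rhs) (cfg_rules g) -> gforest rhs w -> gtree A w
with gforest : list sym -> list T -> Prop :=
| gf_nil : gforest [] []
| gf_t a s w : gforest s w -> gforest (inr a :: s) (a :: w)
| gf_n A s w1 w2 : gtree A w1 -> gforest s w2 -> gforest (inl A :: s) (w1 ++ w2).

Scheme gtree_mind := Induction for gtree Sort Prop
with gforest_mind := Induction for gforest Sort Prop.

Lemma gforest_app : forall s1 w1 s2 w2, gforest s1 w1 -> gforest s2 w2 -> gforest (s1 ++ s2) (w1 ++ w2).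
Proof.
  intros s1 w1 s2 w2 H. induction H; intros H2; simpl; auto.
  - constructor; auto.
  - rewrite <- app_assoc. constructor; auto.
Qed.

Lemma gforest_split : forall s1 s2 w, gforest (s1 ++ s2) w ->
  exists w1 w2, w = w1 ++ w2 /\ gforest s1 w1 /\ gforest s2 w2.
Proof.
  induction s1; intros s2 w H; simpl in H.
  - exists [], w. repeat split; auto. constructor.
  - inversion H; subst.
    + destruct (IHs1 _ _ H3) as (w1 & w2 & -> & Ha & Hb). exists (a0 :: w1), w2.
      repeat split; auto. constructor; auto.
    + destruct (IHs1 _ _ H4) as (u1 & u2 & -> & Ha & Hb). exists (w1 ++ u1), u2.
      rewrite app_assoc. repeat split; auto. constructor; auto.
Qed.

Lemma gforest_terms : forall w, gforest (map inr w) w.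
Proof. induction w; simpl; constructor; auto. Qed.

Lemma gforest_back s s' w : cfg_step g s s' -> gforest s' w -> gforest s w.
Proof.
  intros (l & r & A & rhs & Hin & -> & ->) H.
  destruct (gforest_split _ _ _ H) as (w1 & w2 & -> & H1 & H2).
  destruct (gforest_split _ _ _ H2) as (u1 & u2 & -> & H3 & H4).
  apply gforest_app; auto. constructor; auto. econstructor; eauto.
Qed.

Lemma der_gforest s w : der s (map inr w) -> gforest s w.
Proof.
  intros H. apply clos_rt_rt1n_iff in H. remember (map inr w) as t.
  induction H; subst. apply gforest_terms. eapply gforest_back; eauto.
Qed.

Lemma gtree_der : forall A w, gtree A w -> der [inl A] (map inr w)
with gforest_der : forall s w, gforest s w -> der s (map inr w).
Proof.
  - intros A w H. destruct H. eapply rt_trans.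
    + apply rt_step. exists [], [], A, rhs. split; [auto|split; [reflexivity|]]. simpl. rewrite app_nil_r. auto.
    + apply gforest_der; auto.
  - intros s w H. destruct H.
    + apply rt_refl.
    + simpl. apply (der_app [inr a] [inr a]). apply rt_refl. apply gforest_der; auto.
    + rewrite map_app. apply (der_app [inl A]). apply gtree_der; auto. apply gforest_der; auto.
Qed.

Lemma gtree_lhs A w : gtree A w -> In A (map fst (cfg_rules g)).
Proof. intros H; destruct H. apply in_map_iff. exists (A, rhs); auto. Qed.

Definition mm := S (list_max (map (fun r => length (snd r)) (cfg_rules g))).

Lemma rhs_len A rhs : In (A, rhs) (cfg_rules g) -> length rhs < mm.
Proof.
  intros H. unfold mm. set (l := map (fun r : nat * list sym => length (snd r)) (cfg_rules g)).
  pose proof (list_max_le l (list_max l)) as [Hl _]. specialize (Hl (le_n _)).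
  rewrite Forall_forall in Hl. assert (length rhs <= list_max l); [|lia].
  apply Hl. apply in_map with (f := fun r : nat * list sym => length (snd r)) in H. exact H.
Qed.

Definition Ptree A w := mm < length w -> exists y C v w', der [inl A] (map inr y ++ inl C :: map inr v) /\
  gtree C w' /\ w = y ++ w' ++ v /\ length w' < length w /\ length w <= mm * length w' + mm.

Definition Pforest s w := length s < length w -> exists y C v w', der s (map inr y ++ inl C :: map inr v) /\
  gtree C w' /\ Ptree C w' /\ w = y ++ w' ++ v /\ length w <= length s * (length w' + 1).

Lemma descend_all : forall A w, gtree A w -> Ptree A w.
Proof.
  apply (gtree_mind (fun A w _ => Ptree A w) (fun s w _ => Pforest s w)).
  - intros A rhs w Hin Hf IH Hlen. pose proof (rhs_len _ _ Hin) as Hr.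
    destruct (IH ltac:(lia)) as (y & C & v & w' & D & Gt & Pt & -> & B).
    assert (Hd0 : der [inl A] (map inr y ++ inl C :: map inr v)).
    { eapply rt_trans; [|exact D]. apply rt_step. exists [], [], A, rhs. split; [auto|split; [reflexivity|]].
      simpl. rewrite app_nil_r. auto. }
    rewrite !length_app in *.
    destruct (Nat.eq_dec (length y + length v) 0) as [Hz|Hnz].
    + destruct y; [|simpl in Hz; lia]. destruct v; [|simpl in Hz; lia]. simpl in *.
      rewrite app_nil_r in *.
      destruct (Pt ltac:(lia)) as (y2 & C2 & v2 & w2 & D2 & Gt2 & -> & L1 & L2).
      exists y2, C2, v2, w2. split; [|split; [auto|split; [auto|]]].
      * eapply rt_trans; [exact Hd0|]. exact D2.
      * rewrite !length_app in *. unfold mm in *. split; nia.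
    + exists y, C, v, w'. repeat split; auto. lia. nia.
  - intros H; simpl in H; lia.
  - intros a s w Hf IH Hlen. simpl in Hlen.
    destruct (IH ltac:(lia)) as (y & C & v & w' & D & Gt & Pt & -> & B).
    exists (a :: y), C, v, w'. repeat split; auto.
    + simpl. apply (der_app [inr a] [inr a]). apply rt_refl. exact D.
    + simpl in *. nia.
  - intros A s w1 w2 Gt IHt Hf IHf Hlen. simpl in Hlen. rewrite length_app in Hlen.
    assert (DA : der (inl A :: s) (map inr [] ++ inl A :: map inr w2)).
    { simpl. apply (der_app [inl A] [inl A]). apply rt_refl. apply gforest_der; auto. }
    destruct (le_lt_dec (length w2) (length s)) as [Hs|Hs].
    + exists [], A, w2, w1. repeat split; auto. simpl. rewrite length_app. nia.
    + destruct (IHf Hs) as (y & C & v & w' & D & Gt' & Pt & -> & B).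
      destruct (le_lt_dec (length w') (length w1)) as [Hc|Hc].
      * exists [], A, (y ++ w' ++ v), w1. repeat split; auto. simpl. rewrite !length_app in *. nia.
      * exists (w1 ++ y), C, v, w'. repeat split; auto.
        -- rewrite map_app, <- app_assoc. apply (der_app [inl A]). apply gtree_der; auto. exact D.
        -- rewrite <- app_assoc; auto.
        -- simpl. rewrite !length_app in *. nia.
Qed.

Variables (Q : Type) (dl : Q -> T -> Q) (q0 : Q) (allQ : list Q) (allQ_ok : forall q, In q allQ).
Definition ds (w : list T) := fold_left dl w q0.
Definition tri (A : nat) (x w : list T) := (A, (ds x, ds (x ++ w))).
Definition etri (e : nat * list T * list T) := let '(B, xb, wb) := e in tri B xb wb.
Definition allT := list_prod (map fst (cfg_rules g)) (list_prod allQ allQ).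
Definition KK := length allT.
Notation St := (cfg_start g).

Definition Pumping (W : list T) := exists x y z v r B, W = x ++ y ++ z ++ v ++ r /\ y ++ v <> [] /\
  der [inl St] (map inr x ++ inl B :: map inr r) /\ der [inl B] (map inr y ++ inl B :: map inr v) /\
  der [inl B] (map inr z) /\ ds x = ds (x ++ y) /\ ds (x ++ y ++ z) = ds (x ++ y ++ z ++ v).

Definition Anc (e : nat * list T * list T) A x w r := let '(B, xb, wb) := e in
  In B (map fst (cfg_rules g)) /\ exists y v rb, x = xb ++ y /\ wb = y ++ w ++ v /\ r = v ++ rb /\
  y ++ v <> [] /\ der [inl B] (map inr y ++ inl A :: map inr v) /\
  der [inl St] (map inr xb ++ inl B :: map inr rb).

Lemma tri_in A x w : In A (map fst (cfg_rules g)) -> In (tri A x w) allT.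
Proof. intros H. unfold tri, allT. apply in_prod; auto. apply in_prod; auto. Qed.

Lemma pow_ge (j : nat) : mm + 1 <= (mm + 1) ^ (j + 1).
Proof.
  induction j. rewrite Nat.pow_1_r. lia. replace (S j + 1) with (S (j + 1)) by lia. rewrite Nat.pow_succ_r'. nia.
Qed.

Lemma found (W : list T) anc A x w r : In (tri A x w) (map etri anc) ->
  Forall (fun e => Anc e A x w r) anc -> gtree A w -> W = x ++ w ++ r -> Pumping W.
Proof.
  intros Hin FA Gt HW.
  apply in_map_iff in Hin; destruct Hin as [[[B xb] wb] [He Hin]].
  rewrite Forall_forall in FA; specialize (FA _ Hin); simpl in FA, He.
  destruct FA as (HB & y & v & rb & -> & -> & -> & Hne & D1 & D2).
  unfold tri in He; injection He; intros E2 E1 ->.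
  exists xb, y, w, v, rb, A. split; [|split;[|split;[|split;[|split;[|split]]]]]; auto.
  - subst W; rewrite <- !app_assoc; auto.
  - apply gtree_der; auto.
  - rewrite E2, <- app_assoc. reflexivity.
Qed.

Lemma iter (W : list T) : forall j anc A x w r, der [inl St] (map inr x ++ inl A :: map inr r) ->
  gtree A w -> W = x ++ w ++ r -> NoDup (map etri anc) -> Forall (fun e => Anc e A x w r) anc ->
  KK <= length anc + j -> (mm + 1) ^ (j + 1) < length w -> Pumping W.
Proof.
  induction j as [|j IH]; intros anc A x w r Dr Gt HW ND FA HK Hl.
  all: destruct (classic (In (tri A x w) (map etri anc))) as [Hin|Hnin].
  1,3: eapply found; eauto.
  - exfalso. assert (ND' : NoDup (tri A x w :: map etri anc)) by (constructor; auto).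
    apply NoDup_incl_length with (l' := allT) in ND'.
    + simpl in ND'. rewrite length_map in ND'. unfold KK in HK. lia.
    + intros t Ht. destruct Ht as [<-|Ht]. apply tri_in, (gtree_lhs _ _ Gt).
      apply in_map_iff in Ht. destruct Ht as [[[B xb] wb] [<- Hin]].
      rewrite Forall_forall in FA. specialize (FA _ Hin). simpl in FA. apply tri_in. tauto.
  - pose proof (pow_ge (S j)) as Hp.
    destruct (descend_all A w Gt ltac:(lia)) as (y & C & v & w' & D & Gt' & -> & L1 & L2).
    assert (Hne : y ++ v <> []).
    { intros E. apply app_eq_nil in E. destruct E as [-> ->]. simpl in L1. rewrite app_nil_r in L1. lia. }
    apply (IH ((A, x, y ++ w' ++ v) :: anc) C (x ++ y) w' (v ++ r)).
    + eapply rt_trans; [exact Dr|]. pose proof (der_ctx _ _ D (map inr x) (map inr r)) as H.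
      simpl in H. rewrite !map_app, <- !app_assoc. simpl. rewrite <- !app_assoc in H. simpl in H. exact H.
    + auto.
    + subst W. rewrite <- !app_assoc. auto.
    + simpl. constructor; auto.
    + constructor.
      * simpl. split. apply (gtree_lhs _ _ Gt). exists y, v, r. repeat split; auto.
      * rewrite Forall_forall in FA |- *. intros [[B xb] wb] Hin. specialize (FA _ Hin). simpl in FA |- *.
        destruct FA as (HB & y1 & v1 & rb & -> & -> & -> & Hne1 & D1 & D2).
        split; auto. exists (y1 ++ y), (v ++ v1), rb. repeat split.
        -- rewrite app_assoc; auto.
        -- rewrite <- !app_assoc; auto.
        -- rewrite app_assoc; auto.
        -- intros E. apply Hne. apply app_eq_nil in E as [E1 E2]. apply app_eq_nil in E1 as [_ ->].
           apply app_eq_nil in E2 as [-> _]. reflexivity.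
        -- eapply rt_trans; [exact D1|]. pose proof (der_ctx _ _ D (map inr y1) (map inr v1)) as H.
           rewrite !map_app, <- !app_assoc. simpl. rewrite <- !app_assoc in H. simpl in H. exact H.
        -- exact D2.
    + simpl. lia.
    + pose proof (pow_ge j). replace (S j + 1) with (S (j + 1)) in Hl by lia. rewrite Nat.pow_succ_r' in Hl. set (X := (mm+1)^(j+1)) in *.
      rewrite !length_app in *. nia.
Qed.

Theorem pumping (W : list T) : gforest [inl St] W -> (mm + 1) ^ (KK + 1) < length W -> Pumping W.
Proof.
  intros H Hl. inversion H as [| |A s w1 w2 Ht Hf]; subst. inversion Hf; subst. rewrite app_nil_r in *.
  apply (iter _ KK [] St [] w1 []); simpl; auto. apply rt_refl. rewrite app_nil_r; auto. constructor.
Qed.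
End Gram.

Fixpoint pw {A} (l : list A) (i : nat) : list A := match i with 0 => [] | S i => l ++ pw l i end.

Lemma pw_comm {A} (l : list A) i : pw l i ++ l = l ++ pw l i.
Proof. induction i; simpl. rewrite app_nil_r; auto. rewrite <- app_assoc, IHi. auto. Qed.

Lemma pump_der {T} (g : cfg T) B y z v : cfg_derives g [inl B] (map inr y ++ inl B :: map inr v) ->
  cfg_derives g [inl B] (map inr z) ->
  forall i, cfg_derives g [inl B] (map inr (pw y i ++ z ++ pw v i)).
Proof.
  intros D1 D2. induction i; simpl. rewrite app_nil_r; auto.
  eapply rt_trans; [exact D1|]. pose proof (der_ctx T g _ _ IHi (map inr y) (map inr v)) as H.
  replace (map (@inr nat T) ((y ++ pw y i) ++ z ++ v ++ pw v i)) with
    (map (@inr nat T) y ++ map inr (pw y i ++ z ++ pw v i) ++ map inr v).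
  exact H. rewrite <- (pw_comm v i). rewrite !map_app. rewrite <- !app_assoc. reflexivity.
Qed.

Inductive qs := Q0 | Q1 | Q2 | Qd.
Definition dl (q : qs) (a : sig) : qs :=
  match q, a with
  | Q0, Su => Q0 | Q0, S0 => Q1 | Q0, Sh => Q2
  | Q1, Su => Qd | Q1, S0 => Q1 | Q1, Sh => Q2
  | _, _ => Qd end.
Definition allQ := [Q0; Q1; Q2; Qd].
Lemma allQ_ok q : In q allQ. Proof. destruct q; simpl; auto. Qed.

Lemma accQd w : fold_left dl w Qd = Qd. Proof. induction w; simpl; auto. Qed.
Lemma accQ2 w : fold_left dl w Q2 = Q2 -> w = [].
Proof. destruct w; simpl; auto. rewrite accQd. discriminate. Qed.
Lemma accQ1 w : fold_left dl w Q1 = Q2 -> exists k, w = repeat S0 k ++ [Sh].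
Proof.
  induction w as [|a w IH]; simpl. discriminate.
  destruct a; simpl.
  - rewrite accQd; discriminate.
  - intros H. destruct (IH H) as [k ->]. exists (S k). auto.
  - intros H. apply accQ2 in H. subst. exists 0. auto.
Qed.
Lemma accQ0 w : fold_left dl w Q0 = Q2 -> exists n k, w = wrd n k.
Proof.
  induction w as [|a w IH]; simpl. discriminate.
  destruct a; simpl.
  - intros H. destruct (IH H) as [n [k ->]]. exists (S n), k. auto.
  - intros H. destruct (accQ1 _ H) as [k ->]. exists 0, (S k). auto.
  - intros H. apply accQ2 in H. subst. exists 0, 0. auto.
Qed.
Lemma acc_wrd n k : fold_left dl (wrd n k) Q0 = Q2.
Proof.
  unfold wrd. induction n; simpl; auto.
  destruct k; simpl; auto. induction k; simpl; auto.
Qed.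

Lemma fold_loop y q : fold_left dl y q = q -> forall i, fold_left dl (pw y i) q = q.
Proof. intros H i. induction i; simpl; auto. rewrite fold_left_app, H; auto. Qed.

Definition sig_eq_dec (a b : sig) : {a = b} + {a <> b}. decide equality. Defined.
Definition cnt a l := count_occ sig_eq_dec l a.

Lemma cnt_app a l1 l2 : cnt a (l1 ++ l2) = cnt a l1 + cnt a l2.
Proof. apply count_occ_app. Qed.
Lemma cnt_pw a l i : cnt a (pw l i) = i * cnt a l.
Proof. induction i; simpl; auto. rewrite cnt_app, IHi. lia. Qed.
Lemma cnt_len l : length l = cnt Su l + cnt S0 l + cnt Sh l.
Proof. induction l as [|a l IH]; simpl; auto. unfold cnt in *. destruct a; simpl; lia. Qed.
Lemma cnt_wrd n k : cnt Su (wrd n k) = n /\ cnt S0 (wrd n k) = k /\ cnt Sh (wrd n k) = 1.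
Proof.
  unfold wrd, cnt. rewrite !count_occ_app. simpl.
  assert (forall a b m, a <> b -> count_occ sig_eq_dec (repeat a m) b = 0).
  { intros a b m Hab. induction m; simpl; auto. destruct sig_eq_dec; congruence. }
  assert (forall a m, count_occ sig_eq_dec (repeat a m) a = m).
  { intros a m. induction m; simpl; auto. destruct sig_eq_dec; congruence. }
  rewrite !H0, !H by discriminate. lia.
Qed.

Lemma sq_pow n : 4 <= n -> n * n <= 2 ^ n.
Proof.
  intros H. induction n. lia. destruct (Nat.eq_dec n 3). subst. simpl. lia.
  rewrite Nat.pow_succ_r'. specialize (IHn ltac:(lia)). nia.
Qed.

Theorem theorem3 : ~ context_free L_cc.
Proof.
  intros [g Hg].
  set (P := (mm sig g + 1) ^ (KK sig g qs allQ + 1)).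
  set (k := P). set (N := 2 ^ k - 1).
  assert (HN : 2 ^ k = N + 1). { pose proof (Nat.pow_nonzero 2 k). unfold N. lia. }
  assert (HW : L_cc (wrd N k)) by (apply tm_char; lia).
  apply Hg in HW. apply der_gforest in HW.
  assert (Hlen : P < length (wrd N k)).
  { unfold wrd. rewrite !length_app, !repeat_length. simpl. unfold k. lia. }
  destruct (pumping sig g qs dl Q0 allQ allQ_ok _ HW Hlen) as
    (x & y & z & v & r & B & EW & Hne & D1 & D2 & D3 & S1 & S2).
  assert (Hi : forall i, exists n k', x ++ pw y i ++ z ++ pw v i ++ r = wrd n k' /\ 2 ^ k' <= n + 1).
  { intros i.
    assert (Hacc : fold_left dl (x ++ pw y i ++ z ++ pw v i ++ r) Q0 = Q2).
    { rewrite <- (acc_wrd N k), EW. unfold ds in S1, S2. rewrite !fold_left_app in *.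
      rewrite <- S1 in S2 |- *. rewrite (fold_loop y _ (eq_sym S1)), (fold_loop v _ (eq_sym S2)). rewrite <- S2. auto. }
    destruct (accQ0 _ Hacc) as [n [k' E]]. exists n, k'. split; auto. apply tm_char. rewrite <- E.
    apply Hg. unfold cfg_generates. eapply rt_trans; [exact D1|].
    pose proof (der_ctx sig g _ _ (pump_der g B y z v D2 D3 i) (map inr x) (map inr r)) as H.
    rewrite !map_app. rewrite !map_app in H. simpl in H. rewrite <- !app_assoc in H. exact H. }
  assert (Cnt : forall a i, cnt a (x ++ pw y i ++ z ++ pw v i ++ r) =
     cnt a x + i * cnt a y + cnt a z + i * cnt a v + cnt a r).
  { intros a i. rewrite !cnt_app, !cnt_pw. lia. }
  assert (CW : forall a, cnt a (wrd N k) = cnt a x + cnt a y + cnt a z + cnt a v + cnt a r).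
  { intros a. rewrite EW, !cnt_app. lia. }
  destruct (cnt_wrd N k) as (Wu & W0 & Wh).
  assert (C : forall i, 2 ^ (cnt S0 x + i * cnt S0 y + cnt S0 z + i * cnt S0 v + cnt S0 r) <=
                   cnt Su x + i * cnt Su y + cnt Su z + i * cnt Su v + cnt Su r + 1 /\
                   cnt Sh x + i * cnt Sh y + cnt Sh z + i * cnt Sh v + cnt Sh r = 1).
  { intros i. destruct (Hi i) as (n & k' & E & Hk). rewrite <- !Cnt, E.
    destruct (cnt_wrd n k') as (A1 & A2 & A3). rewrite A1, A2, A3. auto. }
  assert (Hyv : 1 <= cnt Su y + cnt Su v + cnt S0 y + cnt S0 v).
  { destruct (C 0) as [_ H0]. rewrite CW in Wh.
    assert (1 <= length (y ++ v)). { destruct (y ++ v); simpl; [congruence|lia]. }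
    rewrite cnt_len, !cnt_app in H. lia. }
  destruct (Nat.eq_dec (cnt S0 y + cnt S0 v) 0) as [Hz|Hnz].
  - destruct (C 0) as [H0 _]. simpl in H0.
    replace (cnt S0 x + 0 + cnt S0 z + 0 + cnt S0 r) with k in H0 by (rewrite CW in W0; lia).
    rewrite CW in Wu. lia.
  - set (i := N + 5). destruct (C i) as [H0 _].
    assert (2 ^ i <= 2 ^ (cnt S0 x + i * cnt S0 y + cnt S0 z + i * cnt S0 v + cnt S0 r)).
    { apply Nat.pow_le_mono_r. lia. nia. }
    pose proof (sq_pow i ltac:(unfold i; lia)).
    rewrite CW in Wu. nia.
Qed.
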